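(* Let $\alpha\in(0,1)$, $\beta\in[0,1]$ irrational and $\eta>0$. Then $$\dim_{\mathcal H}\Big(\limsup_{n\to\infty}A_{n,1,\eta}\Big)=0,$$ where $A_{n,1,\eta}=\{x\in[0,1]:\ln(n)\cdot v_{n,1}(x)>\eta\}$ and $\limsup_nA_n=\bigcap_N\bigcup_{n\ge N}A_n$.
   Context: $T_1$ is the Farey map ($T_1(x)=\frac x{1-x}$ for $x\le1/2$, $\frac{1-x}x$ for $x>1/2$) with inverse branches $f_{1,0}(x)=\frac x{1+x}$, $f_{1,1}(x)=\frac1{1+x}$; for $\varphi\in\{0,1\}^n$, $f_{1,\varphi}=f_{1,\varphi_1}\circ\dots\circ f_{1,\varphi_n}$. Itinerary: $\omega_{1,k}(\beta)=0$ if $T_1^{k-1}(\beta)\le1/2$, else $1$; $\omega_1(\beta)|_n=(\omega_{1,1}(\beta),\dots,\omega_{1,n}(\beta))$. With $v_{\beta,\alpha}(x)=|x-\beta|^{-\alpha}$, the $1$-tail is $v_{n,1}(x)=|f_{1,\omega_1(\beta)|_n}'(x)|\cdot v_{\beta,\alpha}(f_{1,\omega_1(\beta)|_n}(x))$. $\dim_{\mathcal H}$ denotes Hausdorff dimension. *)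

(* Defs.v *)
From Stdlib Require Import Reals Lra Lia Arith QArith Qreals.
Open Scope R_scope.

Definition T1 (x : R) : R :=
  if Rle_dec x (1/2) then x / (1 - x) else (1 - x) / x.

(** Inverse branches f_{1,0}, f_{1,1} (false = 0, true = 1) *)
Definition f1 (b : bool) (x : R) : R :=
  if b then 1 / (1 + x) else x / (1 + x).

(** Itinerary: omega1 beta k = omega_{1,k}(beta) for k >= 1
    (0 = false if T_1^{k-1}(beta) <= 1/2, else 1 = true). *)
Definition omega1 (beta : R) (k : nat) : bool :=
  if Rle_dec (Nat.iter (k - 1) T1 beta) (1/2) then false else true.

(** fcomp w n = f_{1,w_1} o ... o f_{1,w_n}  (fcomp w 0 = id) *)
Fixpoint fcomp (w : nat -> bool) (n : nat) (x : R) : R :=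
  match n with
  | O => x
  | S m => fcomp w m (f1 (w (S m)) x)
  end.

Definition f_itin (beta : R) (n : nat) : R -> R := fcomp (omega1 beta) n.

(** When f(x) = beta, v_{beta,alpha}(f x) = +infinity, so x belongs to the set. *)
Definition A_set (alpha beta eta : R) (n : nat) (x : R) : Prop :=
  0 <= x <= 1 /\
  (f_itin beta n x = beta \/
   exists d : R, derivable_pt_lim (f_itin beta n) x d /\
     ln (INR n) * (Rabs d * Rpower (Rabs (f_itin beta n x - beta)) (- alpha)) > eta).

Definition limsup_set (A : nat -> R -> Prop) (x : R) : Prop :=
  forall N : nat, exists n : nat, (N <= n)%nat /\ A n x.

(** d is the diameter of U (diameter of the empty set is 0) *)
Definition is_diam (U : R -> Prop) (d : R) : Prop :=
  0 <= d /\
  (forall x y, U x -> U y -> Rabs (x - y) <= d) /\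
  (forall d', 0 <= d' -> (forall x y, U x -> U y -> Rabs (x - y) <= d') -> d <= d').

Definition rpow (d s : R) : R :=
  if Req_EM_T d 0 then (if Req_EM_T s 0 then 1 else 0) else Rpower d s.

Definition hausdorff_null (s : R) (E : R -> Prop) : Prop :=
  forall eps : R, 0 < eps ->
    exists (U : nat -> R -> Prop) (d : nat -> R),
      (forall i, is_diam (U i) (d i)) /\
      (forall x, E x -> exists i, U i x) /\
      (forall N, sum_f_R0 (fun i => rpow (d i) s) N <= eps).

Definition hausdorff_dim_is (E : R -> Prop) (D : R) : Prop :=
  (forall s, 0 <= s -> hausdorff_null s E -> D <= s) /\
  (forall D', (forall s, 0 <= s -> hausdorff_null s E -> D' <= s) -> D' <= D).

Definition irrational (x : R) : Prop := forall q : Q, x <> Q2R q.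

(* Main.v *)
Require Import Defs.
From Stdlib Require Import Reals Lra Lia.
From Coquelicot Require Import Coquelicot.
Open Scope R_scope.

Lemma lnle x y : 0 < x -> x <= y -> ln x <= ln y.
Proof. intros Hx [H|H]. left; apply ln_increasing; lra. subst; lra. Qed.
Lemma exple x y : x <= y -> exp x <= exp y.
Proof. intros [H|H]. left; apply exp_increasing; lra. subst; lra. Qed.

Record M4 := mk4 { ma : R; mb : R; mc : R; md : R }.
Fixpoint coef (w : nat -> bool) (n : nat) : M4 :=
  match n with
  | O => mk4 1 0 0 1
  | S m => let M := coef w m in
     if w (S m) then mk4 (mb M) (ma M + mb M) (md M) (mc M + md M)
     else mk4 (ma M + mb M) (mb M) (mc M + md M) (md M)
  end.
Definition det (M : M4) := ma M * md M - mb M * mc M.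

Lemma coef_inv w n : let M := coef w n in
  0 <= ma M /\ 0 <= mb M /\ 0 <= mc M /\ 1 <= md M /\ INR n + 1 <= mc M + md M
  /\ (det M = 1 \/ det M = -1).
Proof.
  cbv zeta. induction n as [|m IH].
  - unfold det; simpl; lra.
  - destruct IH as (H1&H2&H3&H4&H5&H6). rewrite S_INR. cbn [coef].
    unfold det in *. destruct (w (S m)); cbn [ma mb mc md]; repeat split; try lra.
    all: destruct H6 as [H6|H6]; first [left; nra | right; nra].
Qed.

Lemma f1_pos b x : 0 <= x -> 0 <= f1 b x.
Proof. intros. unfold f1; destruct b; apply Rdiv_le_0_compat; lra. Qed.

Lemma fcomp_closed w n x : 0 <= x ->
  fcomp w n x = (ma (coef w n) * x + mb (coef w n)) / (mc (coef w n) * x + md (coef w n)).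
Proof.
  revert x; induction n as [|m IH]; intros x Hx; simpl.
  - field.
  - rewrite IH by (apply f1_pos; auto).
    destruct (coef_inv w m) as (H1&H2&H3&H4&H5&H6).
    unfold f1; destruct (w (S m)); simpl; field; repeat split; nra.
Qed.

Lemma f1_deriv b x : 0 <= x ->
  derivable_pt_lim (f1 b) x ((if b then -1 else 1) / (1+x)^2).
Proof.
  intros Hx; apply is_derive_Reals; unfold f1; destruct b;
  auto_derive; try lra; field; lra.
Qed.

Lemma fcomp_deriv w n x : 0 <= x ->
  derivable_pt_lim (fcomp w n) x (det (coef w n) / (mc (coef w n) * x + md (coef w n))^2).
Proof.
  revert x; induction n as [|m IH]; intros x Hx.
  - replace (det (coef w 0) / _) with 1 by (unfold det; simpl; field).
    exact (derivable_pt_lim_id x).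
  - assert (E : fcomp w (S m) = comp (fcomp w m) (f1 (w (S m)))) by reflexivity.
    rewrite E.
    destruct (coef_inv w m) as (H1&H2&H3&H4&H5&H6).
    assert (D := derivable_pt_lim_comp _ _ _ _ _ (f1_deriv (w (S m)) x Hx)
                  (IH _ (f1_pos (w (S m)) x Hx))).
    match goal with |- derivable_pt_lim _ _ ?l => replace l with
      (det (coef w m) / (mc (coef w m) * f1 (w (S m)) x + md (coef w m)) ^ 2 *
       ((if w (S m) then -1 else 1) / (1 + x) ^ 2)) end; auto.
    unfold det, f1; simpl; destruct (w (S m)); simpl; field; repeat split; nra.
Qed.

Lemma Rdiv_le_0_compat a b : 0 <= a -> 0 < b -> 0 <= a / b.
Proof. intros. unfold Rdiv. apply Rmult_le_pos; auto. left; apply Rinv_0_lt_compat; auto. Qed.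

Definition yit (beta : R) (n : nat) : R := Nat.iter n T1 beta.

Lemma T1_range y : 0 <= y <= 1 -> 0 <= T1 y <= 1.
Proof.
  intros H; unfold T1; destruct (Rle_dec y (1/2)).
  - split. apply Rdiv_le_0_compat; lra.
    apply Rmult_le_reg_r with (1 - y); [lra|]. unfold Rdiv; rewrite Rmult_assoc, Rinv_l; lra.
  - split. apply Rdiv_le_0_compat; lra.
    apply Rmult_le_reg_r with y; [lra|]. unfold Rdiv; rewrite Rmult_assoc, Rinv_l; lra.
Qed.

Lemma yit_range beta n : 0 <= beta <= 1 -> 0 <= yit beta n <= 1.
Proof. intros H; induction n; simpl; auto. apply T1_range; auto. Qed.

Lemma yit_S beta m : yit beta (S m) = T1 (yit beta m).
Proof. reflexivity. Qed.

Lemma f1_back beta m : 0 <= beta <= 1 ->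
  f1 (omega1 beta (S m)) (yit beta (S m)) = yit beta m.
Proof.
  intros Hb. pose proof (yit_range beta m Hb) as Hy.
  unfold omega1. replace (S m - 1)%nat with m by lia.
  rewrite yit_S. fold (yit beta m). set (y := yit beta m) in *.
  unfold T1, f1. destruct (Rle_dec y (1/2)).
  - assert (0 <= y/(1-y)) by (apply Rdiv_le_0_compat; lra).
    replace (y / (1 - y) / (1 + y / (1 - y))) with ((y/(1-y)) * (1 - y) / ((1 + y / (1 - y)) * (1 - y))) by (field; lra).
    replace ((1 + y / (1 - y)) * (1 - y)) with 1 by (field; lra).
    field; lra.
  - assert (0 <= (1-y)/y) by (apply Rdiv_le_0_compat; lra).
    replace (1 / (1 + (1 - y) / y)) with (y / ((1 + (1 - y) / y) * y)) by (field; lra).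
    replace ((1 + (1 - y) / y) * y) with 1 by (field; lra). field.
Qed.

Lemma fitin_y beta n : 0 <= beta <= 1 -> f_itin beta n (yit beta n) = beta.
Proof.
  intros Hb. unfold f_itin. induction n as [|m IH]. reflexivity.
  cbn [fcomp]. rewrite f1_back; auto.
Qed.

Definition Dn beta n := mc (coef (omega1 beta) n) * yit beta n + md (coef (omega1 beta) n).

Lemma D_rec beta m : 0 <= beta <= 1 -> Dn beta (S m) = (1 + yit beta (S m)) * Dn beta m.
Proof.
  intros Hb. unfold Dn. rewrite <- (f1_back beta m Hb).
  pose proof (yit_range beta (S m) Hb).
  destruct (coef_inv (omega1 beta) m) as (H1&H2&H3&H4&H5&H6).
  cbn [coef]. unfold f1. destruct (omega1 beta (S m)); cbn [mc md]; field; lra.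
Qed.

Lemma D_ge beta n : 0 <= beta <= 1 -> 1 <= Dn beta n /\ (INR n + 1) * yit beta n <= Dn beta n.
Proof.
  intros Hb. pose proof (yit_range beta n Hb).
  destruct (coef_inv (omega1 beta) n) as (H1&H2&H3&H4&H5&H6). unfold Dn. split; nra.
Qed.

Lemma f_diff beta n x : 0 <= beta <= 1 -> 0 <= x ->
  let M := coef (omega1 beta) n in
  f_itin beta n x - beta = det M * (x - yit beta n) / ((mc M * x + md M) * Dn beta n).
Proof.
  intros Hb Hx M. pose proof (yit_range beta n Hb).
  rewrite <- (fitin_y beta n Hb) at 2. unfold f_itin. unfold Dn; fold M.
  rewrite !fcomp_closed by lra. fold M.
  destruct (coef_inv (omega1 beta) n) as (H1&H2&H3&H4&H5&H6). fold M in H1,H2,H3,H4,H5,H6.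
  unfold det. field. split; nra.
Qed.

Lemma mulle a u v : 0 <= a -> u <= v -> a * u <= a * v.
Proof. intros; apply Rmult_le_compat_l; auto. Qed.

Lemma case_lemma (al eta L c d x y : R) :
  0 < al < 1 -> 0 < eta -> 0 < L -> 0 <= c -> 1 <= d -> 0 < x <= 1 -> 0 <= y <= 1 -> x <> y ->
  L * (/ ((c*x+d)*(c*x+d)) * exp (- al * ln (Rabs (x-y) / ((c*x+d)*(c*y+d))))) > eta ->
  (2-al) * ln x < ln L - ln eta + al * ln 2 - (2-2*al) * ln (c+d)
  \/ (y/2 < x < 2*y /\ Rabs (x-y) <
        exp ((ln L - ln eta + (2-al)*ln 2 - (2-2*al)*ln (c*y+d))/al)).
Proof.
  intros Hal Heta HL Hc Hd Hx Hy Hxy H.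
  set (t := c*x+d) in *. set (D := c*y+d) in *. set (u := Rabs (x-y)) in *.
  assert (Ht : 1 <= t) by (unfold t; nra).
  assert (HD : 1 <= D) by (unfold D; nra).
  assert (Hu : 0 < u) by (unfold u; apply Rabs_pos_lt; lra).
  assert (HH : ln L - 2 * ln t - al * (ln u - ln t - ln D) > ln eta).
  { apply Rlt_gt. assert (Hp : 0 < / (t*t) * exp (- al * ln (u / (t*D)))).
    { apply Rmult_lt_0_compat. apply Rinv_0_lt_compat; nra. apply exp_pos. }
    apply ln_increasing in H; [|lra].
    rewrite ln_mult, ln_mult, ln_exp, ln_Rinv, ln_mult in H; try nra.
    unfold Rdiv in H. rewrite ln_mult, ln_Rinv, ln_mult in H; try nra.
    apply Rinv_0_lt_compat; nra. apply Rinv_0_lt_compat; nra. apply exp_pos. }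
  assert (Hln2 : 0 < ln 2) by (rewrite <- ln_1; apply ln_increasing; lra).
  destruct (Rle_dec (2*y) x) as [HA|HA]; [|destruct (Rle_dec (2*x) y) as [HB|HB]].
  - left.
    assert (E1 : ln x - ln 2 <= ln u).
    { replace (ln x - ln 2) with (ln (x/2)).
      apply lnle; [lra|]. unfold u; rewrite Rabs_right; lra.
      unfold Rdiv; rewrite ln_mult, ln_Rinv; lra. }
    assert (E2 : ln D <= ln t) by (apply lnle; unfold D, t; nra).
    assert (E3 : ln (c+d) + ln x <= ln t) by (rewrite <- ln_mult; [apply lnle|..]; unfold t; nra).
    pose proof (mulle al _ _ ltac:(lra) E1). pose proof (mulle al _ _ ltac:(lra) E2).
    pose proof (mulle (2-2*al) _ _ ltac:(lra) E3).
    lra.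
  - left.
    assert (E1 : ln y - ln 2 <= ln u).
    { replace (ln y - ln 2) with (ln (y/2)).
      apply lnle; [lra|]. unfold u; rewrite Rabs_left1; lra.
      unfold Rdiv; rewrite ln_mult, ln_Rinv; lra. }
    assert (E2 : ln D + ln x <= ln t + ln y).
    { rewrite <- !ln_mult by nra. apply lnle. nra. unfold D, t. nra. }
    assert (E3 : ln (c+d) + ln x <= ln t) by (rewrite <- ln_mult; [apply lnle|..]; unfold t; nra).
    pose proof (mulle al _ _ ltac:(lra) E1). pose proof (mulle al _ _ ltac:(lra) E2).
    pose proof (mulle (2-2*al) _ _ ltac:(lra) E3).
    lra.
  - right. split. lra.
    assert (E2 : ln D - ln 2 <= ln t).
    { replace (ln D - ln 2) with (ln (D/2)).
      apply lnle; unfold D, t; nra.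
      unfold Rdiv; rewrite ln_mult, ln_Rinv; lra. }
    pose proof (mulle (2-al) _ _ ltac:(lra) E2).
    rewrite <- (exp_ln u) by lra. apply exp_increasing.
    apply Rmult_lt_reg_l with al; [lra|].
    replace (al * ((ln L - ln eta + (2 - al) * ln 2 - (2 - 2 * al) * ln D) / al))
      with (ln L - ln eta + (2 - al) * ln 2 - (2 - 2 * al) * ln D) by (field; lra).
    lra.
Qed.

Definition sig (al eta beta : R) (n : nat) : R :=
  exp ((ln (ln (INR n)) - ln eta + (2-al)*ln 2 - (2-2*al)*ln (Dn beta n))/al).

Lemma Aset_cases al beta eta n x :
  0 < al < 1 -> 0 < eta -> 0 <= beta <= 1 -> 1 < INR n -> 0 < x ->
  A_set al beta eta n x ->
  (2-al) * ln x < ln (ln (INR n)) - ln eta + al * ln 2 - (2-2*al) * ln (INR n + 1)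
  \/ (yit beta n / 2 < x < 2 * yit beta n /\ Rabs (x - yit beta n) < sig al eta beta n).
Proof.
  intros Hal Heta Hb Hn Hx [Hx1 HA].
  pose proof (yit_range beta n Hb) as Hy.
  pose proof (f_diff beta n x Hb ltac:(lra)) as Hf. cbv zeta in Hf.
  destruct (coef_inv (omega1 beta) n) as (H1&H2&H3&H4&H5&H6).
  set (M := coef (omega1 beta) n) in *.
  set (y := yit beta n) in *.
  pose proof (D_ge beta n Hb) as [HD1 HD2].
  assert (Hsame : x = y -> (2-al) * ln x < ln (ln (INR n)) - ln eta + al * ln 2 - (2-2*al) * ln (INR n + 1)
     \/ (y / 2 < x < 2 * y /\ Rabs (x - y) < sig al eta beta n)).
  { intros ->. right. split. lra. rewrite Rminus_diag, Rabs_R0. apply exp_pos. }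
  assert (Hdet : det M <> 0) by (destruct H6; lra).
  destruct HA as [HA|[dd [Hder Hin]]].
  - apply Hsame. rewrite HA, Rminus_diag in Hf.
    assert (Hz : det M * (x - y) = 0).
    { assert (0 < (mc M * x + md M) * Dn beta n) by (apply Rmult_lt_0_compat; nra).
      apply (Rmult_eq_reg_r (/ ((mc M * x + md M) * Dn beta n))).
      rewrite Rmult_0_l. symmetry. exact Hf. apply Rgt_not_eq, Rlt_gt, Rinv_0_lt_compat; auto. }
    apply Rmult_integral in Hz. destruct Hz; lra.
  - destruct (Req_dec x y) as [E|E]. apply Hsame; auto.
    pose proof (fcomp_deriv (omega1 beta) n x ltac:(lra)) as Hd2.
    fold M in Hd2. unfold f_itin in Hder.
    pose proof (uniqueness_limite _ _ _ _ Hder Hd2) as ->.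
    assert (HL : 0 < ln (INR n)) by (rewrite <- ln_1; apply ln_increasing; lra).
    assert (Ht : 1 <= mc M * x + md M) by nra.
    assert (Habs : Rabs (det M / (mc M * x + md M) ^ 2) = / ((mc M * x + md M) * (mc M * x + md M))).
    { unfold Rdiv. rewrite Rabs_mult, Rabs_inv.
      replace (Rabs (det M)) with 1 by (destruct H6 as [-> | ->]; unfold Rabs; destruct Rcase_abs; lra).
      rewrite Rabs_right.
      simpl; field. apply Rgt_not_eq; lra. apply Rle_ge, pow2_ge_0. }
    assert (Habs2 : Rabs (f_itin beta n x - beta) = Rabs (x - y) / ((mc M * x + md M) * Dn beta n)).
    { rewrite Hf. unfold Rdiv. rewrite !Rabs_mult.
      replace (Rabs (det M)) with 1 by (destruct H6 as [-> | ->]; unfold Rabs; destruct Rcase_abs; lra).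
      rewrite (Rabs_right (/ _)). ring. left; apply Rinv_0_lt_compat; apply Rmult_lt_0_compat; nra. }
    rewrite Habs in Hin. rewrite Habs2 in Hin. unfold Rpower in Hin.
    unfold Dn in Hin. fold M y in Hin.
    destruct (case_lemma al eta (ln (INR n)) (mc M) (md M) x y Hal Heta HL H3 H4
                ltac:(lra) Hy E) as [C|C].
    + exact Hin.
    + left. assert (ln (INR n + 1) <= ln (mc M + md M)) by (apply lnle; lra).
      pose proof (mulle (2-2*al) _ _ ltac:(lra) H). lra.
    + right. unfold sig, Dn. fold M y. exact C.
Qed.

Lemma EV (A B C : R) : 0 <= A -> 0 < B ->
  exists N : nat, (3 <= N)%nat /\ forall n, (N <= n)%nat ->
    A * ln (ln (INR n)) - B * ln (INR n + 1) + C <= 0.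
Proof.
  intros HA HB.
  set (dl := B / (2 * (A + 1))).
  assert (Hdl : 0 < dl) by (unfold dl; apply Rdiv_lt_0_compat; lra).
  set (K := A * (-1 - ln dl) + C).
  destruct (INR_unbounded (exp (2 * Rabs K / B))) as [N0 HN0].
  exists (Nat.max N0 3). split. lia. intros n Hn.
  assert (Hn3 : 3 <= INR n) by (replace 3 with (INR 3) by (simpl; lra); apply le_INR; lia).
  assert (HnN : INR N0 <= INR n) by (apply le_INR; lia).
  set (L := ln (INR n)).
  assert (HL : 0 < L) by (unfold L; rewrite <- ln_1; apply ln_increasing; lra).
  assert (F1 : ln L <= dl * L - 1 - ln dl).
  { pose proof (exp_ineq1_le (ln (dl * L))) as H. rewrite exp_ln in H by nra.
    rewrite ln_mult in H by lra. lra. }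
  assert (F2 : A * ln L <= A * (dl * L - 1 - ln dl)) by (apply Rmult_le_compat_l; lra).
  assert (F3 : A * dl <= B / 2).
  { unfold dl. apply Rmult_le_reg_r with (2 * (A+1)); [lra|].
    replace (A * (B / (2 * (A + 1))) * (2 * (A + 1))) with (A * B) by (field; lra).
    nra. }
  assert (F4 : A * dl * L <= B / 2 * L) by (apply Rmult_le_compat_r; lra).
  set (L' := ln (INR n + 1)).
  assert (F5 : L <= L') by (apply lnle; lra).
  assert (F6 : 2 * Rabs K / B <= L').
  { unfold L'. rewrite <- (ln_exp (2 * Rabs K / B)). apply lnle. apply exp_pos. lra. }
  assert (F7 : 2 * Rabs K <= B * L').
  { apply Rmult_le_compat_l with (r := B) in F6; [|lra].
    replace (B * (2 * Rabs K / B)) with (2 * Rabs K) in F6 by (field; lra). lra. }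
  assert (K <= Rabs K) by apply Rle_abs.
  assert (F8 : B / 2 * L <= B / 2 * L') by (apply Rmult_le_compat_l; lra).
  unfold K in *. lra.
Qed.

Definition term (beta e : R) (n : nat) := yit beta n * exp (- e * ln (Dn beta n)).

Lemma ln1p y : 0 <= y <= 1 -> y / 2 <= ln (1 + y).
Proof.
  intros Hy. pose proof (exp_ineq1_le (ln (/ (1 + y)))) as H.
  rewrite exp_ln in H by (apply Rinv_0_lt_compat; lra).
  rewrite ln_Rinv in H by lra.
  assert (y / (1+y) >= y / 2).
  { unfold Rdiv. apply Rle_ge, Rmult_le_compat_l; [lra|].
    apply Rinv_le_contravar; lra. }
  assert (/ (1 + y) = 1 - y / (1+y)) by (field; lra). lra.
Qed.

Lemma tele beta e : 0 <= beta <= 1 -> 0 < e -> forall N,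
  sum_f_R0 (term beta e) N + (2/e) * exp (- e * ln (Dn beta N)) <= 1 + 2/e.
Proof.
  intros Hb He N. induction N as [|N IH].
  - simpl. unfold term, Dn, yit; simpl.
    replace (0 * beta + 1) with 1 by ring. rewrite ln_1.
    replace (- e * 0) with 0 by ring. rewrite exp_0. lra.
  - simpl sum_f_R0. unfold term at 2.
    rewrite D_rec by auto.
    pose proof (yit_range beta (S N) Hb) as Hy.
    pose proof (D_ge beta N Hb) as [HD _].
    rewrite ln_mult by lra.
    set (y := yit beta (S N)) in *.
    set (g := exp (- e * (ln (1 + y) + ln (Dn beta N)))).
    assert (Hg : exp (- e * ln (Dn beta N)) = g * exp (e * ln (1 + y))).
    { unfold g. rewrite <- exp_plus. f_equal. ring. }
    rewrite Hg in IH.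
    assert (E1 : 1 + e * (y/2) <= exp (e * ln (1 + y))).
    { eapply Rle_trans; [|apply exp_ineq1_le]. pose proof (ln1p y Hy).
      apply Rplus_le_compat_l, Rmult_le_compat_l; lra. }
    assert (Hg0 : 0 < g) by apply exp_pos.
    assert (E2 : g * (1 + e * (y/2)) <= g * exp (e * ln (1 + y))) by (apply Rmult_le_compat_l; lra).
    assert (E3 : 2 / e * (g * (1 + e * (y/2))) <= 2/e * (g * exp (e * ln (1 + y)))).
    { apply Rmult_le_compat_l; auto. left; apply Rdiv_lt_0_compat; lra. }
    replace (2 / e * (g * (1 + e * (y/2)))) with (2/e * g + y * g) in E3 by (field; lra).
    lra.
Qed.

Lemma null_pos (al beta eta s : R) :
  0 < al < 1 -> 0 <= beta <= 1 -> 0 < eta -> 0 < s ->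
  hausdorff_null s (limsup_set (A_set al beta eta)).
Proof.
  intros Hal Hb Heta Hs eps Heps.
  set (e := s * (1 - al) / al).
  assert (He : 0 < e) by (unfold e; apply Rdiv_lt_0_compat; nra).
  set (eps' := eps / (1 + 2 / e)).
  assert (H2e : 0 < 2 / e) by (apply Rdiv_lt_0_compat; lra).
  assert (Heps' : 0 < eps') by (unfold eps'; apply Rdiv_lt_0_compat; lra).
  set (cost := fun n => Rpower (2 * sig al eta beta n) s).
  set (U := fun i => match i with
     | O => fun z => z = 0
     | S n => if Rle_dec (cost n) (eps' * term beta e n)
              then fun z => yit beta n - sig al eta beta n <= z <= yit beta n + sig al eta beta n
              else fun _ => False end).
  set (d := fun i => match i with
     | O => 0
     | S n => if Rle_dec (cost n) (eps' * term beta e n) then 2 * sig al eta beta n else 0 end).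
  exists U, d. split; [|split].
  - intros [|n]; simpl.
    + split; [lra|split]. intros x y -> ->. rewrite Rminus_diag, Rabs_R0; lra. intros; lra.
    + destruct (Rle_dec (cost n) (eps' * term beta e n)).
      * assert (0 < sig al eta beta n) by (unfold sig; apply exp_pos).
        split; [lra|split].
        -- intros x y Hx Hy. unfold Rabs; destruct Rcase_abs; lra.
        -- intros d' Hd' Hh0. specialize (Hh0 (yit beta n + sig al eta beta n) (yit beta n - sig al eta beta n)).
           rewrite Rabs_right in Hh0 by lra. assert (Hh := Hh0 ltac:(lra) ltac:(lra)). lra.
      * split; [lra|split]. intros x y []. intros; lra.
  - intros x Hx.
    destruct (Hx 0%nat) as [n0 [_ [Hx01 _]]].
    destruct (Req_dec x 0) as [Hx0|Hx0]. exists 0%nat. simpl. exact Hx0.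
    assert (Hxp : 0 < x) by lra.
    destruct (EV 1 (2 - 2*al) (- ln eta + al * ln 2 - (2 - al) * ln x) ltac:(lra) ltac:(lra))
      as [N1 [HN1 HN1']].
    destruct (EV (s/al) e (s * ln 2 + (s/al) * (- ln eta + (2-al) * ln 2) - (1 + e) * ln (x/2) - ln eps'))
      as [N2 [HN2 HN2']].
    { left; apply Rdiv_lt_0_compat; lra. } auto.
    destruct (Hx (Nat.max N1 N2)) as [n [Hn HA]].
    assert (Hn3 : 3 <= INR n) by (replace 3 with (INR 3) by (simpl; lra); apply le_INR; lia).
    destruct (Aset_cases al beta eta n x Hal Heta Hb ltac:(lra) Hxp HA) as [C|[C1 C2]].
    + specialize (HN1' n ltac:(lia)). lra.
    + exists (S n). simpl.
      destruct (Rle_dec (cost n) (eps' * term beta e n)) as [Hc|Hc].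
      * unfold Rabs in C2; destruct Rcase_abs in C2; lra.
      * exfalso; apply Hc. clear Hc.
        specialize (HN2' n ltac:(lia)).
        pose proof (yit_range beta n Hb) as Hy.
        pose proof (D_ge beta n Hb) as [HD1 HD2].
        set (y := yit beta n) in *. set (D := Dn beta n) in *.
        assert (Ey : ln (x/2) <= ln y) by (apply lnle; lra).
        assert (ED : ln (INR n + 1) + ln (x/2) <= ln D).
        { rewrite <- ln_mult by lra. apply lnle. nra. nra. }
        assert (ED' : e * (ln (INR n + 1) + ln (x/2)) <= e * ln D) by (apply Rmult_le_compat_l; lra).
        unfold cost, term, Rpower, sig. fold y D.
        rewrite ln_mult by (try apply exp_pos; lra). rewrite ln_exp.
        rewrite <- (exp_ln eps') by lra. rewrite <- (exp_ln y) by lra.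
        rewrite <- !exp_plus. apply exple.
        set (X := ln (ln (INR n)) - ln eta + (2 - al) * ln 2).
        match goal with |- ?l <= _ => replace l with (s * ln 2 + (s/al) * X - 2 * e * ln D)
          by (unfold X, e; field; lra) end.
        unfold X. lra.
  - assert (Hsum : forall N, sum_f_R0 (fun i => rpow (d i) s) (S N) <= eps' * sum_f_R0 (term beta e) N).
    { assert (Hr0 : rpow 0 s = 0).
      { unfold rpow. destruct (Req_EM_T 0 0); [|lra]. destruct (Req_EM_T s 0); lra. }
      assert (Hstep : forall n, rpow (d (S n)) s <= eps' * term beta e n).
      { intros n. simpl. assert (0 <= term beta e n).
        { unfold term. pose proof (yit_range beta n Hb). apply Rmult_le_pos; [lra|left; apply exp_pos]. }
        destruct (Rle_dec (cost n) (eps' * term beta e n)) as [Hc|Hc].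
        - assert (0 < sig al eta beta n) by (unfold sig; apply exp_pos).
          unfold rpow. destruct (Req_EM_T (2 * sig al eta beta n) 0); [lra|]. exact Hc.
        - rewrite Hr0. nra. }
      induction N as [|N IH].
      - change (rpow (d 0%nat) s + rpow (d 1%nat) s <= eps' * term beta e 0).
        change (d 0%nat) with 0. rewrite Hr0. pose proof (Hstep 0%nat). lra.
      - replace (sum_f_R0 (fun i => rpow (d i) s) (S (S N))) with
           (sum_f_R0 (fun i => rpow (d i) s) (S N) + rpow (d (S (S N))) s) by reflexivity.
        replace (sum_f_R0 (term beta e) (S N)) with (sum_f_R0 (term beta e) N + term beta e (S N)) by reflexivity.
        pose proof (Hstep (S N)). lra. }
    intros [|N].
    + simpl. unfold rpow. destruct (Req_EM_T 0 0); [|lra]. destruct (Req_EM_T s 0); lra.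
    + eapply Rle_trans; [apply Hsum|].
      pose proof (tele beta e Hb He N).
      assert (0 <= 2 / e * exp (- e * ln (Dn beta N))) by (left; apply Rmult_lt_0_compat; [lra|apply exp_pos]).
      assert (Hle : sum_f_R0 (term beta e) N <= 1 + 2/e) by lra.
      apply Rmult_le_compat_l with (r := eps') in Hle; [|lra].
      unfold eps' in Hle. replace (eps / (1 + 2 / e) * (1 + 2 / e)) with eps in Hle by (field; lra).
      exact Hle.
Qed.

Theorem lemma4p18 (alpha beta eta : R)
  (halpha : 0 < alpha < 1) (hbeta : 0 <= beta <= 1) (hirr : irrational beta)
  (heta : 0 < eta) :
  hausdorff_dim_is (limsup_set (A_set alpha beta eta)) 0.
Proof.
  split.
  - intros s Hs _. exact Hs.
  - intros D' HD'. destruct (Rle_dec D' 0) as [H|H]; auto.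
    exfalso. assert (Hs : 0 < D'/2) by lra.
    pose proof (HD' (D'/2) ltac:(lra) (null_pos alpha beta eta (D'/2) halpha hbeta heta Hs)). lra.
Qed.
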